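(* Fix integers $s,b\ge1$ and let $\{a_i\}$ be the $(s,b)$-Generacci sequence. For $n\ge1$ let $P_n(g)$ be the fraction, among all bin gaps occurring in the $(s,b)$-Generacci legal decompositions of all integers $m\in[a_{(n-1)b+1},a_{nb+1})$, of those bin gaps equal to $g$. Then the limit $P(g):=\lim_{n\to\infty}P_n(g)$ exists, $P(g)=0$ for $g<s+1$, and \[P(g)=b\,(\lambda_1^b)^{-g}\qquad (g\ge s+1),\] where $\lambda_1$ is the largest root of $x^{(s+1)b}-x^{sb}-b=0$.
   Context: Fix integers $s,b\ge1$. For an increasing sequence of positive integers $\{a_i\}_{i\ge1}$ define bins $\mathcal{B}_n=\{a_{b(n-1)+1},\dots,a_{bn}\}$ for $n\ge1$, with $\mathcal{B}_j=\emptyset$ for $j\le 0$. A decomposition $m=a_{\ell_1}+\dots+a_{\ell_k}$ with $a_{\ell_1}>\dots>a_{\ell_k}$ is an $(s,b)$-Generacci legal decomposition if $\{a_{\ell_i},a_{\ell_{i+1}}\}\not\subset\mathcal{B}_{j-s}\cup\dots\cup\mathcal{B}_j$ for all $i,j$. The $(s,b)$-Generacci sequence is the increasing sequence in which every $a_i$ is the smallest positive integer with no legal decomposition using $a_1,\dots,a_{i-1}$; every positive integer has a unique legal decomposition. For $m$ with legal decomposition $m=a_{\ell_1}+\dots+a_{\ell_k}$, $\ell_1>\dots>\ell_k$ (so $a_{\ell_i}\in\mathcal{B}_{\lceil \ell_i/b\rceil}$), the bin gaps of $m$ are the $k-1$ numbers $\lceil \ell_i/b\rceil-\lceil \ell_{i+1}/b\rceil$,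 $1\le i\le k-1$. *)

(* Defs.v *)
From HB Require Import structures.
From mathcomp Require Import all_boot all_order all_algebra.
From mathcomp Require Import all_classical all_reals all_analysis.
Set Implicit Arguments. Unset Strict Implicit. Unset Printing Implicit Defensive.
Import Order.TTheory GRing.Theory Num.Theory.

(* Sequences a : nat -> nat are indexed from 1 (a 0 is unused).
   Index l lies in bin B_n with n = ceil(l / b). *)
Definition bin (b l : nat) : nat := (l + b.-1) %/ b.

(* index l lies in B_{j-s} u ... u B_j (bins with index <= 0 are empty,
   and bin b l >= 1 for l >= 1, so truncated subtraction is harmless) *)
Definition in_window (s b j l : nat) : Prop := j - s <= bin b l <= j.

(* ls = [:: l_1; ...; l_k] is the list of indices of a legal decomposition:
   strictly decreasing positive indices, and no two consecutive summands lie
   together in a window of s+1 consecutive bins. *)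
Definition legal (s b : nat) (ls : seq nat) : Prop :=
  sorted gtn ls /\ all (fun l => 0 < l) ls /\
  forall i, i.+1 < size ls ->
    ~ (exists j, in_window s b j (nth 0 ls i) /\ in_window s b j (nth 0 ls i.+1)).

Definition legal_decomp (s b : nat) (a : nat -> nat) (ls : seq nat) (m : nat) : Prop :=
  legal s b ls /\ \sum_(l <- ls) a l = m.

Definition decomposable_below (s b : nat) (a : nat -> nat) (i m : nat) : Prop :=
  exists ls, legal_decomp s b a ls m /\ all (fun l => l < i) ls.

Definition is_generacci (s b : nat) (a : nat -> nat) : Prop :=
  (forall i j, 1 <= i -> i < j -> a i < a j) /\
  (forall i, 1 <= i ->
     [/\ 0 < a i,
         ~ decomposable_below s b a i (a i)
       & forall m, 0 < m < a i -> decomposable_below s b a i m]).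

Definition bin_gaps (b : nat) (ls : seq nat) : seq nat :=
  match ls with
  | [::] => [::]
  | x :: t => pairmap (fun p q => bin b p - bin b q) x t
  end.

Local Open Scope ring_scope.

Definition Pn (R : realType) (b : nat) (a : nat -> nat) (dec : nat -> seq nat)
    (g n : nat) : R :=
  (\sum_(a ((n.-1) * b).+1 <= m < a (n * b).+1) count_mem g (bin_gaps b (dec m)))%N%:R
  / (\sum_(a ((n.-1) * b).+1 <= m < a (n * b).+1) size (bin_gaps b (dec m)))%N%:R.

(* Main.v *)
Require Import Defs.
From HB Require Import structures.
From mathcomp Require Import all_boot all_order all_algebra.
From mathcomp Require Import all_classical all_reals all_analysis.
From mathcomp Require Import ring lra zify.
Import Order.TTheory GRing.Theory Num.Theory.
Import numFieldNormedType.Exports.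

(* The (s,b)-Generacci combinatorics: structure of the sequence, unique
   decompositions, and exact counts of bin gaps in terms of a linear
   recurrence Wd. *)
Module Comb1.
Set Implicit Arguments. Unset Strict Implicit. Unset Printing Implicit Defensive.

Fixpoint lrec (s b x0 : nat) (h : nat -> nat) (fuel n : nat) {struct fuel} : nat :=
  if fuel is f.+1 then
    (if n is n'.+1 then lrec s b x0 h f n' + b * lrec s b x0 h f (n' - s) + h n' else x0)
  else x0.

Lemma lrec_fuel s b x0 h f1 f2 n : n <= f1 -> n <= f2 ->
  lrec s b x0 h f1 n = lrec s b x0 h f2 n.
Proof.
elim: f1 f2 n => [|f1 IH] [|f2] [|n] //= h1 h2.
by rewrite (IH f2 n) ?(IH f2 (n - s)) //; lia.
Qed.

Definition Xs s b x0 h n := lrec s b x0 h n n.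

Lemma Xs0 s b x0 h : Xs s b x0 h 0 = x0.
Proof. by []. Qed.

Lemma XsS s b x0 h n :
  Xs s b x0 h n.+1 = Xs s b x0 h n + b * Xs s b x0 h (n - s) + h n.
Proof.
by rewrite /Xs /= (lrec_fuel _ _ _ _ (f2 := n - s) (n := n - s)) //; lia.
Qed.

Definition Cd s b := Xs s b 1 (fun _ => 0).
Definition Wd s b := Xs s b 0 (fun j => b * b * Cd s b (j - s)).

Lemma Wd_mono s b j k : j <= k -> Wd s b j <= Wd s b k.
Proof.
elim: k => [|k IH]; first by rewrite leqn0 => /eqP ->.
rewrite leq_eqVlt => /orP [/eqP -> //| /IH h].
by apply: (leq_trans h); rewrite /Wd XsS -addnA leq_addr.
Qed.

Section Comb.
Variables (s b : nat) (a : nat -> nat).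
Hypothesis b1 : 0 < b.

Definition Rl (x y : nat) := bin b y + s < bin b x.
Definition legalb (L : seq nat) := sorted Rl L && all (fun l => 0 < l) L.

Lemma bin_mono x y : x <= y -> bin b x <= bin b y.
Proof. by move=> h; rewrite /bin leq_div2r // leq_add2r. Qed.

Lemma bin_le y K : (bin b y <= K) = (y <= b * K).
Proof.
rewrite /bin -ltnS ltn_divLR //.
have : b.-1.+1 = b by rewrite prednK.
lia.
Qed.

Lemma bin_pos y : 0 < y -> 0 < bin b y.
Proof. by move=> hy; rewrite lt0n; apply/negP => /eqP h; move: (bin_le y 0); rewrite h; lia. Qed.

Lemma Rl_lt x y : Rl x y -> y < x.
Proof.
rewrite /Rl => h; rewrite ltnNge; apply/negP => /bin_mono; lia.
Qed.

Lemma Rl_trans : transitive Rl.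
Proof. by move=> y x z; rewrite /Rl; lia. Qed.

Lemma win_iff x y : y < x ->
  (exists j, in_window s b j x /\ in_window s b j y) <-> ~~ Rl x y.
Proof.
move=> hxy; have hb := bin_mono (ltnW hxy); rewrite /Rl /in_window; split.
  by move=> [j [/andP [h1 h2] /andP [h3 h4]]]; lia.
by move=> h; exists (bin b x); lia.
Qed.

Lemma legalP L : legal s b L <-> legalb L.
Proof.
rewrite /legal /legalb; split.
  move=> [hs [hp hw]]; rewrite hp andbT; apply/(sortedP 0) => i hi.
  have hlt : nth 0 L i.+1 < nth 0 L i by move/(sortedP 0): hs => /(_ i hi).
  by apply/negPn/negP => /(win_iff hlt) ?; apply: (hw i hi).
move=> /andP [hs hp]; split; first by apply: sub_sorted hs => x y /Rl_lt.
split=> // i hi.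
have hr : Rl (nth 0 L i) (nth 0 L i.+1) by move/(sortedP 0): hs => /(_ i hi).
by move/(win_iff (Rl_lt hr)); rewrite hr.
Qed.

Definition t (i : nat) := b * (bin b i - s.+1) + 1.

Lemma lt_t l x : 0 < l -> (l < t x) = Rl x l.
Proof.
move=> hl; rewrite /t /Rl addn1 ltnS -bin_le.
have := bin_pos hl; lia.
Qed.

Lemma t_pos x : 0 < t x.
Proof. by rewrite /t addn1. Qed.

Lemma t_le x : 0 < x -> t x <= x.
Proof.
move=> hx; rewrite /t.
have h := bin_le x (bin b x).-1.
have hp := bin_pos hx.
have h2 : b * (bin b x).-1 < x.
  rewrite ltnNge -h; lia.
have : b * (bin b x - s.+1) <= b * (bin b x).-1.
  by rewrite leq_mul2l; apply/orP; right; lia.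
lia.
Qed.

Definition sumA (L : seq nat) := \sum_(l <- L) a l.
Definition below (i : nat) (L : seq nat) := all (fun l => l < i) L.

Lemma legalb_cons x L :
  legalb (x :: L) = [&& 0 < x, legalb L & below (t x) L].
Proof.
rewrite /legalb /= (path_sortedE Rl_trans).
case hx: (0 < x); last by rewrite !andbF.
case hL: (all (fun l => 0 < l) L); last by rewrite !andbF.
have e : all (Rl x) L = below (t x) L.
  apply: eq_in_all => l hl; rewrite lt_t //; by move/allP: hL => /(_ l hl).
rewrite e; by case: (sorted Rl L); case: (below (t x) L).
Qed.

Lemma legalb_nil : legalb [::].
Proof. by []. Qed.

Lemma below_mono i j L : i <= j -> below i L -> below j L.
Proof. by move=> hij /allP h; apply/allP => l /h; lia. Qed.

Lemma sumA_cons x L : sumA (x :: L) = a x + sumA L.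
Proof. by rewrite /sumA big_cons. Qed.

Hypothesis Ha : is_generacci s b a.

Lemma a_lt i j : 0 < i -> i < j -> a i < a j.
Proof. by case: Ha => h _; apply: h. Qed.

Lemma a_le i j : 0 < i -> i <= j -> a i <= a j.
Proof.
move=> hi; rewrite leq_eqVlt => /orP [/eqP -> //| h]; exact/ltnW/a_lt.
Qed.

Lemma a_pos i : 0 < i -> 0 < a i.
Proof. by case: Ha => _ h hi; case: (h i hi). Qed.

Lemma decP i m : decomposable_below s b a i m <->
  exists L, [/\ legalb L, below i L & sumA L = m].
Proof.
split.
  by move=> [L [[/legalP hl hs] hb]]; exists L.
by move=> [L [hl hb hs]]; exists L; split => //; split => //; apply/legalP.
Qed.

Lemma nodec i : 0 < i -> ~ exists L, [/\ legalb L, below i L & sumA L = a i].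
Proof. by case: Ha => _ h hi; case: (h i hi) => _ H _ /decP. Qed.

Lemma alldec i m : 0 < i -> 0 < m < a i ->
  exists L, [/\ legalb L, below i L & sumA L = m].
Proof. by case: Ha => _ h hi hm; case: (h i hi) => _ _ H; apply/decP/H. Qed.

Lemma below1 L : legalb L -> below 1 L -> L = [::].
Proof.
case: L => // x L; rewrite legalb_cons /below /= => /andP [hx _] /andP [h _].
lia.
Qed.

Lemma a1 : a 1 = 1.
Proof.
have h0 := a_pos (ltnSn 0).
case: (ltnP 1 (a 1)) => h; last by lia.
have [L [hl hb hs]] := alldec (ltnSn 0) (m := 1) (ltac:(by rewrite h)).
by move: hs; rewrite (below1 hl hb) /sumA big_nil; lia.
Qed.

Definition Rec i := a i.+1 = a i + a (t i).

Lemma Q1 i : 0 < i -> (forall j, 0 < j < i -> Rec j) ->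
  forall L, legalb L -> below i L -> sumA L < a i.
Proof.
elim/ltn_ind: i => i IH hi hR [|x L]; first by rewrite /sumA big_nil a_pos.
rewrite legalb_cons /below /= => /and3P [hx hl hbt] /andP [hxi hbL].
have htx := t_le hx.
have : sumA L < a (t x).
  apply: IH => //; [lia | exact: t_pos | move=> j hj; apply: hR; lia].
rewrite sumA_cons => h.
have := hR x (ltac:(lia)); rewrite /Rec => e.
have := a_le (ltn0Sn x) hxi; lia.
Qed.

Lemma Q2 i : 0 < i -> (forall j, 0 < j < i -> Rec j) ->
  forall m, m < a i -> exists L, [/\ legalb L, below i L & sumA L = m].
Proof.
elim/ltn_ind: i => i IH hi hR m hm.
case: i hi IH hR hm => // [[|j]] _ IH hR hm.
  by exists [::]; split => //; move: hm; rewrite a1 /sumA big_nil; lia.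
have e := hR j.+1 (ltac:(lia)); rewrite /Rec in e.
rewrite e in hm.
case: (ltnP m (a j.+1)) => hmj.
  have [L [hl hb hs]] := IH j.+1 (ltnSn _) (ltn0Sn _) (fun k hk => hR k (ltac:(lia))) m hmj.
  by exists L; split => //; apply: below_mono hb; lia.
have htj := t_le (ltn0Sn j).
have [L [hl hb hs]] := IH (t j.+1) (ltac:(lia)) (t_pos _)
  (fun k hk => hR k (ltac:(lia))) (m - a j.+1) (ltac:(lia)).
exists (j.+1 :: L); split.
- by rewrite legalb_cons hl hb.
- by rewrite /below /= ltnSn /=; apply: below_mono hb; lia.
- by rewrite sumA_cons hs; lia.
Qed.

Lemma RecAll i : 0 < i -> Rec i.
Proof.
elim/ltn_ind: i => i IH hi.
have hR : forall j, 0 < j < i -> Rec j by move=> j /andP [h1 h2]; apply: IH.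
have hti := t_le hi.
have hR' : forall j, 0 < j < t i -> Rec j by move=> j hj; apply: hR; lia.
rewrite /Rec; apply/eqP; rewrite eqn_leq; apply/andP; split.
  rewrite leqNgt; apply/negP => hgt.
  have hpos : 0 < a i + a (t i) by have := a_pos hi; lia.
  have [[|x L] [hl hb hs]] := alldec (ltn0Sn i) (m := a i + a (t i)) (ltac:(lia)).
    by move: hs; rewrite /sumA big_nil; lia.
  move: hl hb hs; rewrite legalb_cons /below /= => /and3P [hx hl hbt] /andP [hxi hbL].
  rewrite sumA_cons => hs.
  case: (ltnP x i) => hxi'.
    have H := @Q1 i hi hR (x :: L) ltac:(by rewrite legalb_cons hx hl)
      ltac:(by rewrite /below /= hxi'; apply: (below_mono (i := t x)) => //; have := t_le hx; lia).
    move: H; rewrite sumA_cons; lia.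
  have exi : x = i by lia.
  subst x.
  have := Q1 (t_pos i) hR' hl hbt; lia.
rewrite leqNgt; apply/negP => hlt.
have hp := a_pos (ltn0Sn i).
have [L [hl hb hs]] : exists L, [/\ legalb L, below i.+1 L & sumA L = a i.+1].
  case: (ltnP (a i.+1) (a i)) => h.
    have [L [hl hb hs]] := Q2 hi hR h.
    by exists L; split => //; apply: below_mono hb.
  have [L [hl hb hs]] := Q2 (t_pos i) hR' (m := a i.+1 - a i) (ltac:(lia)).
  exists (i :: L); split.
  - by rewrite legalb_cons hl hb hi.
  - by rewrite /below /= ltnSn /=; apply: below_mono hb; lia.
  - by rewrite sumA_cons hs; lia.
by apply: (nodec (ltn0Sn i)); exists L.
Qed.

Lemma Q1all i L : 0 < i -> legalb L -> below i L -> sumA L < a i.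
Proof. by move=> hi; apply: Q1 => // j /andP [hj _]; apply: RecAll. Qed.

Lemma Q2all i m : 0 < i -> m < a i -> exists L, [/\ legalb L, below i L & sumA L = m].
Proof. by move=> hi; apply: Q2 => // j /andP [hj _]; apply: RecAll. Qed.

Lemma cons_bound x L : legalb (x :: L) -> a x <= sumA (x :: L) < a x.+1.
Proof.
move=> hl; apply/andP; split; first by rewrite sumA_cons leq_addr.
apply: Q1all => //.
move: hl; rewrite legalb_cons => /and3P [hx _ hb].
by rewrite /below /= ltnSn /=; apply: below_mono hb; have := t_le hx; lia.
Qed.

Lemma legalb_tail x L : legalb (x :: L) -> legalb L.
Proof. by rewrite legalb_cons => /and3P []. Qed.

Lemma uniq_dec L1 L2 : legalb L1 -> legalb L2 -> sumA L1 = sumA L2 -> L1 = L2.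
Proof.
elim: L1 L2 => [|x L1 IH] [|y L2] //.
- move=> _ h2; have := cons_bound h2; have := a_pos (i := y).
  move: h2; rewrite legalb_cons => /and3P [hy _ _] /(_ hy); rewrite /sumA big_nil; lia.
- move=> h1 _; have := cons_bound h1; have := a_pos (i := x).
  move: h1; rewrite legalb_cons => /and3P [hx _ _] /(_ hx); rewrite /sumA big_nil; lia.
move=> h1 h2 e.
have b1' := cons_bound h1; have b2' := cons_bound h2.
have hx : 0 < x by move: h1; rewrite legalb_cons => /and3P [].
have hy : 0 < y by move: h2; rewrite legalb_cons => /and3P [].
case: (ltngtP x y) => hxy.
- have := a_le (i := x.+1) (ltn0Sn _) hxy; lia.
- have := a_le (i := y.+1) (ltn0Sn _) hxy; lia.
subst y; congr (_ :: _); apply: IH; [exact: legalb_tail h1 | exact: legalb_tail h2|].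
by move: e; rewrite !sumA_cons; lia.
Qed.

Lemma below_of_sum i L : 0 < i -> legalb L -> sumA L < a i -> below i L.
Proof.
move=> hi; case: L => [//|x L] hl hs.
have := cons_bound hl; move: hl; rewrite legalb_cons => /and3P [hx _ hb] hbd.
have hxi : x < i.
  rewrite ltnNge; apply/negP => hix; have := a_le hi hix; lia.
by rewrite /below /= hxi /=; apply: below_mono hb; have := t_le hx; lia.
Qed.

Variable dec : nat -> seq nat.
Hypothesis Hdec : forall m, 0 < m -> legal_decomp s b a (dec m) m.

Definition D m := if m == 0 then [::] else dec m.

Lemma D_legal m : legalb (D m).
Proof.
rewrite /D; case: (ltnP 0 m) => hm; last by have -> : m = 0 by lia.
have -> : (m == 0) = false by lia.
by case: (Hdec hm) => /legalP.
Qed.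

Lemma D_sum m : sumA (D m) = m.
Proof.
rewrite /D; case: (ltnP 0 m) => hm; last by (have -> : m = 0 by lia); rewrite /sumA big_nil.
have -> : (m == 0) = false by lia.
by case: (Hdec hm).
Qed.

Lemma D_uniq L m : legalb L -> sumA L = m -> D m = L.
Proof. by move=> hl hs; apply: uniq_dec; rewrite ?D_legal ?D_sum. Qed.

Lemma D_cons i m : 0 < i -> m < a (t i) -> D (a i + m) = i :: D m.
Proof.
move=> hi hm; apply: D_uniq; last by rewrite sumA_cons D_sum.
rewrite legalb_cons hi D_legal /=; apply: below_of_sum; rewrite ?D_sum ?D_legal //.
exact: t_pos.
Qed.

Lemma D_pos m : 0 < m -> exists x L, D m = x :: L.
Proof.
move=> hm; case e: (D m) => [|x L]; last by exists x, L.
by have := D_sum m; rewrite e /sumA big_nil; lia.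
Qed.

Lemma top_lt m j : 0 < m -> 0 < j -> (head 0 (D m) < j) = (m < a j).
Proof.
move=> hm hj; have [x [L e]] := D_pos hm; rewrite e /=.
have := cons_bound (L := L) (x := x); rewrite -e D_legal D_sum => /(_ isT) /andP [h1 h2].
have hx : 0 < x by move: (D_legal m); rewrite e legalb_cons => /and3P [].
apply/idP/idP => h.
  by have := a_le (i := x.+1) (ltn0Sn _) h; lia.
rewrite ltnNge; apply/negP => hjx; have := a_le hj hjx; lia.
Qed.

Lemma sum_range i (f : seq nat -> nat) : 0 < i ->
  \sum_(a i <= m < a i.+1) f (D m) = \sum_(0 <= m < a (t i)) f (i :: D m).
Proof.
move=> hi; rewrite (RecAll hi) -{1}(add0n (a i)) big_addn addKn.
by apply: eq_big_nat => m /andP [_ hm]; rewrite addnC D_cons.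
Qed.

Definition phi g L := count_mem g (bin_gaps b L).

Lemma gaps_cons x L : bin_gaps b (x :: L) =
  if L is y :: _ then (bin b x - bin b y) :: bin_gaps b L else [::].
Proof. by case: L. Qed.

Lemma phi_cons g x L : phi g (x :: L) =
  (if L is y :: _ then (bin b x - bin b y == g) else false) + phi g L.
Proof. by rewrite /phi gaps_cons; case: L => [|y L] //=. Qed.

Lemma count_int lo hi X : lo <= hi <= X ->
  \sum_(0 <= m < X) ((lo <= m) && (m < hi)) = hi - lo.
Proof.
move=> /andP [h1 h2].
rewrite (big_cat_nat (n := lo)) //=; last by lia.
rewrite (big_cat_nat (n := hi) (m := lo)) //=.
have z1 : \sum_(0 <= m < lo) ((lo <= m) && (m < hi) : nat) = 0.
  by rewrite big1_seq // => m /andP [_]; rewrite mem_index_iota; lia.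
have z2 : \sum_(hi <= m < X) ((lo <= m) && (m < hi) : nat) = 0.
  by rewrite big1_seq // => m /andP [_]; rewrite mem_index_iota; lia.
rewrite z1 z2 add0n addn0.
rewrite (eq_big_nat _ _ (F2 := fun _ => 1)); last by move=> m hm; lia.
by rewrite sum_nat_const_nat; lia.
Qed.

Definition S g i := \sum_(0 <= m < a i) phi g (D m).
Definition C k := a (b * k + 1).
Definition e k := if 0 < k then C k - C k.-1 else 0.

Lemma C_le j k : j <= k -> C j <= C k.
Proof. by move=> h; apply: a_le; [lia | rewrite leq_add2r leq_mul2l h orbT]. Qed.

Lemma C0 : C 0 = 1.
Proof. by rewrite /C muln0 a1. Qed.

Lemma S_rec g i : 0 < i -> s < g -> S g i.+1 = S g i + S g (t i) + e (bin b i - g).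
Proof.
move=> hi hg; rewrite /S (big_cat_nat (n := a i)) //=; last by apply: a_le.
rewrite -addnA; congr (_ + _).
rewrite sum_range // (eq_big_nat _ _ (F2 := fun m =>
   ((0 < bin b i - g) && (C (bin b i - g).-1 <= m) && (m < C (bin b i - g)) : nat) + phi g (D m))).
  rewrite big_split addnC /=; congr (_ + _).
  rewrite /e; case: (ltnP 0 (bin b i - g)) => hk /=; last by rewrite big1.
  apply: count_int; rewrite C_le /=; last by lia.
  rewrite /C /t; apply: a_le; first by lia.
  rewrite leq_add2r leq_mul2l; apply/orP; right; lia.
move=> m /andP [_ hm]; rewrite phi_cons; congr (_ + _).
case: (ltnP 0 m) => hm0.
  have [y [L ey]] := D_pos hm0; rewrite ey.
  have hy : 0 < y by move: (D_legal m); rewrite ey legalb_cons => /and3P [].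
  have hyt : y < t i.
    have := below_of_sum (t_pos i) (D_legal m); rewrite D_sum ey => /(_ hm).
    by rewrite /below /= => /andP [].
  move: hyt; rewrite lt_t // /Rl => hyt.
  have hby := bin_pos hy.
  have -> : (bin b i - bin b y == g) = (bin b y == bin b i - g).
    by apply/idP/idP => /eqP h; apply/eqP; lia.
  case: (ltnP 0 (bin b i - g)) => hk /=; last by lia.
  have hl1 := top_lt hm0 (j := b * (bin b i - g) + 1) (ltac:(by rewrite addn1)).
  have hl2 := top_lt hm0 (j := b * (bin b i - g).-1 + 1) (ltac:(by rewrite addn1)).
  rewrite ey /= in hl1 hl2.
  rewrite /C -hl1 [a _ <= m]leqNgt -hl2 !addn1 !ltnS -!bin_le.
  by lia.
have -> : m = 0 by lia.
rewrite /D /=; case: (ltnP 0 (bin b i - g)) => hk //=.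
by have := C_le (leq0n (bin b i - g).-1); rewrite C0; lia.
Qed.

Lemma bin_r k r : r < b -> bin b (b * k + 1 + r) = k.+1.
Proof.
move=> hr; apply/eqP; rewrite eqn_leq bin_le ltnNge bin_le mulnS; lia.
Qed.

Lemma bin_step (Y : nat -> nat) z k :
  (forall r, r < b -> Y (b * k + 1 + r).+1 = Y (b * k + 1 + r) + z) ->
  Y (b * k.+1 + 1) = Y (b * k + 1) + b * z.
Proof.
move=> h.
have H : forall r, r <= b -> Y (b * k + 1 + r) = Y (b * k + 1) + r * z.
  elim=> [|r IH] hr; first by rewrite addn0 mul0n addn0.
  by rewrite addnS h // IH ?mulSn; lia.
by rewrite -H // mulnS; congr Y; lia.
Qed.

Lemma t_r k r : r < b -> t (b * k + 1 + r) = b * (k - s) + 1.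
Proof. by move=> hr; rewrite /t bin_r. Qed.

Lemma C_rec k : C k.+1 = C k + b * C (k - s).
Proof.
by apply: bin_step => r hr; rewrite (RecAll (i := b * k + 1 + r) (ltac:(lia))) t_r.
Qed.

Lemma C_Cd k : C k = Cd s b k.
Proof.
elim/ltn_ind: k => [[|k]] IH; first by rewrite C0.
by rewrite C_rec /Cd XsS addn0 -/(Cd s b k) -/(Cd s b (k - s)) !IH //; lia.
Qed.

Definition T g k := S g (b * k + 1).

Lemma T_rec g k : s < g -> T g k.+1 = T g k + b * (T g (k - s) + e (k.+1 - g)).
Proof.
move=> hg; apply: bin_step => r hr.
rewrite (S_rec (i := b * k + 1 + r)) ?t_r ?bin_r //; last by lia.
by rewrite /T addnA.
Qed.

Lemma e_val j : e j.+1 = b * C (j - s).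
Proof. by rewrite /e /= C_rec; lia. Qed.

Lemma T0 g : T g 0 = 0.
Proof. by rewrite /T /S muln0 add0n a1 big_nat1. Qed.

Lemma T_W g k : s < g -> T g k = Wd s b (k - g).
Proof.
move=> hg; elim/ltn_ind: k => [[|k]] IH; first by rewrite T0.
rewrite T_rec // !IH //; last by lia.
case: (leqP g k) => hgk.
  have -> : k.+1 - g = (k - g).+1 by lia.
  rewrite e_val /Wd XsS -/(Wd s b (k - g)) -/(Wd s b (k - g - s)) C_Cd.
  have -> : k - s - g = k - g - s by lia.
  by rewrite /Wd mulnDr !mulnA; lia.
have -> : k.+1 - g = 0 by lia.
have -> : k - g = 0 by lia.
have -> : k - s - g = 0 by lia.
by rewrite /e /= /Wd Xs0; lia.
Qed.

Lemma gaps_gt L : legalb L -> all (fun x => s < x) (bin_gaps b L).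
Proof.
elim: L => [|x L IH] //; case: L IH => [|y L] IH hl //.
rewrite gaps_cons /=; apply/andP; split; last by apply: IH; apply: legalb_tail hl.
move: hl; rewrite legalb_cons => /and3P [hx hl /andP [hy _]].
move: hy; rewrite lt_t; last by move: hl; rewrite legalb_cons => /and3P [].
by rewrite /Rl; lia.
Qed.

Lemma gaps_bound L n : (forall x, x \in L -> bin b x <= n) ->
  all (fun g => g < n.+1) (bin_gaps b L).
Proof.
elim: L => [|x L IH] //; case: L IH => [|y L] IH hl //.
rewrite gaps_cons /=; apply/andP; split.
  by have := hl x (mem_head _ _); lia.
apply: IH => z hz; apply: hl; by rewrite inE hz orbT.
Qed.

Lemma sum_count l N : all (fun g => g < N) l ->
  \sum_(0 <= g < N) count_mem g l = size l.
Proof.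
elim: l => [|x l IH]; first by move=> _; rewrite big1.
move=> /= /andP [hx hl]; rewrite -(IH hl) -add1n.
rewrite (eq_big_nat _ _ (F2 := fun g => (x == g : nat) + count_mem g l)); last first.
  by move=> g _; rewrite /= eq_sym.
rewrite big_split /=; congr (_ + _).
rewrite (big_cat_nat (n := x)) //=; last exact: ltnW.
rewrite [X in _ + X]big_ltn // eqxx.
rewrite big1_seq; last by move=> g /andP [_]; rewrite mem_index_iota; lia.
rewrite big1_seq; last by move=> g /andP [_]; rewrite mem_index_iota; lia.
by [].
Qed.

Lemma tele (V : nat -> nat) lo hi : (forall g, V g.+1 <= V g) -> lo <= hi ->
  \sum_(lo <= g < hi) (V g - V g.+1) = V lo - V hi.
Proof.
move=> hV; elim: hi => [|hi IH]; first by rewrite leqn0 => /eqP ->; rewrite big_geq // subnn.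
have mono : forall j, lo <= j -> V j <= V lo.
  move=> j; elim: j => [|j IHj]; first by rewrite leqn0 => /eqP ->.
  rewrite leq_eqVlt => /orP [/eqP -> //| h]; apply: leq_trans (hV j) (IHj h).
rewrite leq_eqVlt => /orP [/eqP -> | h]; first by rewrite big_geq // subnn.
rewrite big_nat_recr //= IH //.
have := hV hi; have := mono hi h; lia.
Qed.

Lemma dec_D k m : a (b * k + 1) <= m -> dec m = D m.
Proof.
move=> h; have : 0 < m.
  by have := a_le (i := 1) (ltnSn 0) (ltac:(lia) : 1 <= b * k + 1); rewrite a1; lia.
by rewrite /D; case: m h => //.
Qed.

Lemma Num_val g k :
  \sum_(a (b * k + 1) <= m < a (b * k.+1 + 1)) count_mem g (bin_gaps b (dec m)) =
  if s < g then Wd s b (k.+1 - g) - Wd s b (k - g) else 0.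
Proof.
rewrite (eq_big_nat _ _ (F2 := fun m => phi g (D m))); last first.
  by move=> m /andP [hm _]; rewrite (dec_D hm).
case: ifP => hg.
  rewrite -!T_W // /T.
  have hs : S g (b * k.+1 + 1) = S g (b * k + 1) +
     \sum_(a (b * k + 1) <= m < a (b * k.+1 + 1)) phi g (D m).
    rewrite /S (big_cat_nat (n := a (b * k + 1))) //=.
    by apply: a_le; [lia | rewrite leq_add2r leq_mul2l; apply/orP; right].
  by rewrite hs addKn.
rewrite big1_seq // => m _; apply/count_memPn/negP => hin.
have := gaps_gt (D_legal m) => /allP /(_ g hin); rewrite hg.
by [].
Qed.

Lemma Den_val k :
  \sum_(a (b * k + 1) <= m < a (b * k.+1 + 1)) size (bin_gaps b (dec m)) =
  Wd s b (k - s).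
Proof.
rewrite (eq_big_nat _ _ (F2 := fun m => \sum_(0 <= g < k.+2) count_mem g (bin_gaps b (dec m)))); last first.
  move=> m /andP [hm1 hm2]; rewrite sum_count //; apply: gaps_bound => x.
  rewrite (dec_D hm1) => hx.
  have := below_of_sum (i := b * k.+1 + 1) (ltac:(lia)) (D_legal m); rewrite D_sum.
  move=> /(_ hm2) /allP /(_ x hx); rewrite addn1 ltnS -bin_le; by [].
rewrite exchange_big_nat /=.
rewrite (eq_big_nat _ _ (F2 := fun g => if s < g then Wd s b (k.+1 - g) - Wd s b (k - g) else 0)); last first.
  by move=> g _; rewrite Num_val.
case: (leqP s.+1 k.+2) => hsk; last first.
  rewrite big1_seq; last by move=> g /andP [_]; rewrite mem_index_iota => h; case: ifP => //; lia.
  by have -> : k - s = 0 by lia.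
rewrite (big_cat_nat (n := s.+1)) //=.
rewrite big1_seq; last by move=> g /andP [_]; rewrite mem_index_iota => h; case: ifP => //; lia.
rewrite add0n.
rewrite (eq_big_nat _ _ (F2 := fun g => Wd s b (k.+1 - g) - Wd s b (k.+1 - g.+1))); last first.
  by move=> g /andP [h1 h2]; rewrite h1.
rewrite tele //; last by move=> g; apply: Wd_mono; lia.
have -> : k.+1 - k.+2 = 0 by lia.
by rewrite /Wd Xs0 subn0.
Qed.

End Comb.

End Comb1.

(* Averaging recurrences: bounds and convergence. *)
Module An1.
Set Implicit Arguments. Unset Strict Implicit. Unset Printing Implicit Defensive.
Local Open Scope classical_set_scope.
Local Open Scope ring_scope.

Section Renewal.
Variable R : realType.
Variables (p : R) (s : nat).
Hypotheses (hp : 0 < p) (hp1 : p < 1).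

Definition Ecum (eps : nat -> R) (i : nat) := \sum_(k < i.+1) `|eps k|.

Lemma Ecum_ge0 eps i : 0 <= Ecum eps i.
Proof. by apply: sumr_ge0 => k _. Qed.

Lemma Ecum_S eps i : Ecum eps i.+1 = Ecum eps i + `|eps i.+1|.
Proof. by rewrite /Ecum big_ord_recr. Qed.

Lemma Ecum_mono eps m n : (m <= n)%N -> Ecum eps m <= Ecum eps n.
Proof.
elim: n => [|n IH]; first by rewrite leqn0 => /eqP ->.
rewrite leq_eqVlt => /orP [/eqP -> //| /IH h].
by apply: (le_trans h); rewrite Ecum_S lerDl.
Qed.

Lemma L1 (x eps : nat -> R) (lo hi : R) :
  (forall j, x (j + s.+1)%N = p * x (j + s)%N + (1 - p) * x j + eps (j + s.+1)%N) ->
  (forall i, (i <= s)%N -> lo <= x i <= hi) ->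
  forall i, lo - Ecum eps i <= x i <= hi + Ecum eps i.
Proof.
move=> hrec hini; elim/ltn_ind => i IH.
case: (leqP i s) => his.
  have := hini i his; have := Ecum_ge0 eps i => h0 /andP [h1 h2].
  by apply/andP; split; lra.
have -> : i = ((i - s.+1) + s.+1)%N by rewrite subnK.
set j := (i - s.+1)%N.
have hj1 := IH j (ltac:(rewrite /j; lia)).
have hj2 := IH (j + s)%N (ltac:(rewrite /j; lia)).
rewrite hrec addnS Ecum_S.
have hE := @Ecum_mono eps j (j + s)%N (leq_addr s j).
move: hj1 hj2 => /andP [a1 a2] /andP [b1 b2].
rewrite -addnS.
have n1 := ler_norm (eps (j + s.+1)%N).
have n2 : - `|eps (j + s.+1)%N| <= eps (j + s.+1)%N by rewrite lerNl -normrN ler_norm.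
have m1 : p * x (j + s)%N <= p * (hi + Ecum eps (j + s)) by rewrite ler_wpM2l // ltW.
have m2 : p * (lo - Ecum eps (j + s)) <= p * x (j + s)%N by rewrite ler_wpM2l // ltW.
have hq : 0 <= 1 - p by have := hp1; lra.
have m3 : (1 - p) * x j <= (1 - p) * (hi + Ecum eps (j + s)) by apply: ler_wpM2l => //; lra.
have m4 : (1 - p) * (lo - Ecum eps (j + s)) <= (1 - p) * x j by apply: ler_wpM2l => //; lra.
by apply/andP; split; lra.
Qed.

Definition homog (x : nat -> R) :=
  forall j, x (j + s.+1)%N = p * x (j + s)%N + (1 - p) * x j.

Lemma L1h x lo hi : homog x -> (forall i, (i <= s)%N -> lo <= x i <= hi) ->
  forall i, lo <= x i <= hi.
Proof.
move=> hx hini i.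
have := @L1 x (fun _ => 0) lo hi (fun j => ltac:(by rewrite hx addr0)) hini i.
have -> : Ecum (fun _ => 0 : R) i = 0 by rewrite /Ecum big1 // => k _; rewrite normr0.
by rewrite subr0 addr0.
Qed.

Lemma homog_shift x k : homog x -> homog (fun i => x (k + i)%N).
Proof. by move=> hx j /=; rewrite addnA hx addnA. Qed.

Lemma homog_opp x : homog x -> homog (fun i => - x i).
Proof. by move=> hx j /=; rewrite hx; ring. Qed.

Lemma L2lo x lo hi : homog x -> (forall i, (i <= s)%N -> lo <= x i <= hi) ->
  forall k, p ^+ k * (x s - lo) <= x (s + k)%N - lo.
Proof.
move=> hx hini; have hp' := hp; have hp1' := hp1.
have hall := L1h hx hini.
elim=> [|k IH]; first by rewrite expr0 mul1r addn0.
have -> : (s + k.+1)%N = (k + s.+1)%N by lia.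
rewrite hx exprS -mulrA.
have h1 : p * (p ^+ k * (x s - lo)) <= p * (x (s + k)%N - lo) by apply: ler_wpM2l => //; exact: ltW.
have /andP [h2 _] := hall k.
have h3 : 0 <= (1 - p) * (x k - lo) by apply: mulr_ge0; lra.
rewrite addnC; lra.
Qed.

Definition alpha := p ^+ s.+1.

Lemma alpha_gt0 : 0 < alpha.
Proof. by apply: exprn_gt0. Qed.

Lemma alpha_le1 : alpha <= 1.
Proof. by apply: exprn_ile1; [exact: ltW | exact: ltW]. Qed.

Lemma L2 x lo hi : homog x -> (forall i, (i <= s)%N -> lo <= x i <= hi) ->
  forall i, (i <= s)%N ->
  lo + alpha * (x s - lo) <= x (i + s.+1)%N <= hi - alpha * (hi - x s).
Proof.
move=> hx hini i his; have hp' := hp; have hp1' := hp1.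
have hpow : alpha <= p ^+ i.+1 by apply: ler_wiXn2l; [exact: ltW | exact: ltW | ].
have /andP [hs1 hs2] := hini s (leqnn s).
have l1 := L2lo hx hini i.+1.
have hini' : forall i, (i <= s)%N -> - hi <= - x i <= - lo.
  by move=> i' /hini /andP [h1 h2]; rewrite !lerN2 h2 h1.
have l2 := L2lo (homog_opp hx) hini' i.+1.
have -> : (i + s.+1)%N = (s + i.+1)%N by lia.
have m1 : alpha * (x s - lo) <= p ^+ i.+1 * (x s - lo) by apply: ler_wpM2r; lra.
have m2 : alpha * (- x s - - hi) <= p ^+ i.+1 * (- x s - - hi) by apply: ler_wpM2r; lra.
apply/andP; split; lra.
Qed.

Lemma L3 x lo hi : homog x -> (forall i, (i <= s)%N -> lo <= x i <= hi) ->
  forall k, exists lo' hi', hi' - lo' = (1 - alpha) ^+ k * (hi - lo) /\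
    forall i, lo' <= x (k * s.+1 + i)%N <= hi'.
Proof.
move=> hx hini; elim=> [|k [lo' [hi' [e h]]]].
  exists lo, hi; split; first by rewrite expr0 mul1r.
  by move=> i; rewrite mul0n add0n; apply: L1h.
set y := fun i => x (k * s.+1 + i)%N.
have hy : homog y := homog_shift (k * s.+1) hx.
have hini' : forall i, (i <= s)%N -> lo' <= y i <= hi' by move=> i _; apply: h.
exists (lo' + alpha * (y s - lo')), (hi' - alpha * (hi' - y s)); split.
  by rewrite exprS -mulrA -e; ring.
have hz : homog (fun i => x (k.+1 * s.+1 + i)%N) := homog_shift (k.+1 * s.+1) hx.
apply: (L1h hz) => i his.
have := L2 hy hini' his.
by rewrite /y; have -> : (k.+1 * s.+1 + i = k * s.+1 + (i + s.+1))%N by rewrite mulSn; lia.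
Qed.

Lemma Conv x lo hi : homog x -> (forall i, (i <= s)%N -> lo <= x i <= hi) ->
  cvgn x /\ lo <= limn x.
Proof.
move=> hx hini; have hp' := hp; have hp1' := hp1.
have ha0 := alpha_gt0; have ha1 := alpha_le1.
have hall := L1h hx hini.
have cv : cvgn x.
  apply/cauchy_cvgP/cauchy_exP => e he.
  have hz : `|1 - alpha| < 1 by rewrite ger0_norm; lra.
  have /cvgrPdist_lt /(_ (e / (hi - lo + 1))) := cvg_expr hz.
  have hd : 0 <= hi - lo by have := hini 0%N (leq0n s); lra.
  have hd1 : 0 < e / (hi - lo + 1) by apply: divr_gt0 => //; lra.
  move=> /(_ hd1) [N _ hN].
  have [lo' [hi' [e' h']]] := L3 hx hini N.
  exists (x (N * s.+1)%N); exists (N * s.+1)%N => // n /= hn.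
  rewrite /ball /=.
  have := h' 0%N; rewrite addn0 => /andP [u1 u2].
  have := h' (n - N * s.+1)%N; rewrite subnKC // => /andP [v1 v2].
  have hNN := hN N (leqnn N); rewrite sub0r normrN ger0_norm in hNN; last first.
    by apply: exprn_ge0; lra.
  have hlt : hi' - lo' < e.
    rewrite e'; have hpos : 0 < hi - lo + 1 by lra.
    move: hNN; rewrite ltr_pdivlMr // => hNN.
    have : (1 - alpha) ^+ N * (hi - lo) <= (1 - alpha) ^+ N * (hi - lo + 1).
      by apply: ler_wpM2l; [apply: exprn_ge0; lra | lra].
    lra.
  rewrite ltr_norml; apply/andP; split; lra.
split => //.
apply: limr_ge => //; near=> n.
by have /andP [] := hall n.
Unshelve. all: by end_near.
Qed.
End Renewal.

End An1.

(* Asymptotics of the counting sequences. *)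
Module An2.
Import Comb1 An1.
Set Implicit Arguments. Unset Strict Implicit. Unset Printing Implicit Defensive.
Local Open Scope classical_set_scope.
Local Open Scope ring_scope.

Lemma Cd_mono s b j k : (j <= k)%N -> (Cd s b j <= Cd s b k)%N.
Proof.
elim: k => [|k IH]; first by rewrite leqn0 => /eqP ->.
rewrite leq_eqVlt => /orP [/eqP -> //| /IH h].
by apply: (leq_trans h); rewrite /Cd XsS -addnA leq_addr.
Qed.

Lemma Cd_ge1 s b k : (1 <= Cd s b k)%N.
Proof. exact: (Cd_mono s b (leq0n k)). Qed.

Section Main.
Variable R : realType.
Variables (s b : nat) (rho : R).
Hypotheses (hb : (0 < b)%N) (hrho : 1 < rho) (heq : rho ^+ s.+1 = rho ^+ s + b%:R).

Definition p := rho^-1.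

Lemma rho_gt0 : 0 < rho.
Proof. have := hrho; lra. Qed.

Lemma rho_neq0 : rho != 0.
Proof. by rewrite gt_eqF // rho_gt0. Qed.

Lemma rhoX_neq0 k : rho ^+ k != 0.
Proof. by rewrite expf_neq0 // rho_neq0. Qed.

Lemma p_gt0 : 0 < p.
Proof. by rewrite /p invr_gt0 rho_gt0. Qed.

Lemma p_lt1 : p < 1.
Proof. by rewrite /p invf_lt1 // rho_gt0. Qed.

Lemma q_eq : 1 - p = b%:R / rho ^+ s.+1.
Proof.
have -> : (b%:R : R) = rho ^+ s.+1 - rho ^+ s by rewrite heq; ring.
rewrite /p exprS; field.
by rewrite ?rho_neq0 ?rhoX_neq0.
Qed.

Definition cc k := (Cd s b k)%:R / rho ^+ k.

Lemma cc_homog : homog p s cc.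
Proof.
move=> j; rewrite /cc addnS {1}/Cd XsS addn0 addnK -/(Cd s b (j + s)) -/(Cd s b j).
rewrite q_eq natrD natrM /p exprS exprD exprS.
field.
by rewrite rho_neq0 !rhoX_neq0.
Qed.

Lemma cc_cvg : cvgn cc /\ rho ^- s <= limn cc.
Proof.
apply: (Conv p_gt0 p_lt1 cc_homog) => i hi.
have hr0 := rho_gt0.
have hri : 0 < rho ^+ i by apply: exprn_gt0.
have hrs : 0 < rho ^+ s by apply: exprn_gt0.
have hle : rho ^+ i <= rho ^+ s by rewrite ler_eXn2l.
have h2 : 1 <= rho ^+ i by apply: exprn_ege1; apply: ltW hrho.
have h1 : 1 <= (Cd s b i)%:R :> R by rewrite ler1n Cd_ge1.
have h3 : (Cd s b i)%:R <= (Cd s b s)%:R :> R by rewrite ler_nat Cd_mono.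
apply/andP; split.
  apply: (@le_trans _ _ (rho ^- i)).
    by rewrite lef_pV2 ?qualifE /= ?hri ?hrs.
  rewrite /cc ler_pdivlMr // mulVf ?rhoX_neq0 //.
rewrite /cc ler_pdivrMr //.
have : (Cd s b s)%:R * 1 <= (Cd s b s)%:R * rho ^+ i :> R by apply: ler_wpM2l.
rewrite mulr1 => h4; exact: le_trans h3 h4.
Qed.

Definition ww k := (Wd s b k)%:R / rho ^+ k.

Lemma ww_rec j : ww (j + s.+1)%N =
  p * ww (j + s)%N + (1 - p) * ww j + (1 - p) * b%:R * cc j.
Proof.
rewrite /ww /cc addnS {1}/Wd XsS addnK -/(Wd s b (j + s)) -/(Wd s b j).
rewrite q_eq !natrD !natrM /p exprS exprD exprS.
field.
by rewrite rho_neq0 !rhoX_neq0.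
Qed.

Definition cinf := limn cc.

Lemma cinf_gt0 : 0 < cinf.
Proof.
have [_ h] := cc_cvg; apply: lt_le_trans h.
by rewrite invr_gt0 exprn_gt0 // rho_gt0.
Qed.

Definition phi := (1 - p) * b%:R * cinf.
Definition mu := 1 + s%:R * (1 - p).
Definition K := phi / mu.

Lemma mu_gt0 : 0 < mu.
Proof.
have h := p_lt1; have h2 : 0 <= s%:R :> R by [].
rewrite /mu; have : 0 <= s%:R * (1 - p) by apply: mulr_ge0; lra.
lra.
Qed.

Lemma K_gt0 : 0 < K.
Proof.
rewrite /K /phi; apply: divr_gt0; last exact: mu_gt0.
apply: mulr_gt0; last exact: cinf_gt0.
apply: mulr_gt0; last by rewrite ltr0n.
by have := p_lt1; lra.
Qed.

Definition uu k := ww k - K * k%:R.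
Definition eps i := (1 - p) * b%:R * cc (i - s.+1)%N - phi.

Lemma uu_rec j : uu (j + s.+1)%N = p * uu (j + s)%N + (1 - p) * uu j + eps (j + s.+1)%N.
Proof.
rewrite /uu /eps ww_rec addnK !natrD /K.
have hm : mu != 0 by rewrite gt_eqF // mu_gt0.
rewrite /mu in hm *.
field => //.
Qed.

Definition MM := \sum_(i < s.+1) `|uu i|.

Lemma uu_bound i : `|uu i| <= MM + Ecum eps i.
Proof.
have H := @L1 R p s p_gt0 p_lt1 uu eps (- MM) MM uu_rec.
have hini : forall k, (k <= s)%N -> - MM <= uu k <= MM.
  move=> k hk.
  have hM : `|uu k| <= MM.
    rewrite /MM (bigD1 (Ordinal (hk : (k < s.+1)%N))) //= lerDl.
    by apply: sumr_ge0 => l _.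
  by rewrite -ler_norml.
have /andP [h1 h2] := H hini i.
by rewrite ler_norml; apply/andP; split; lra.
Qed.

Lemma cc_cvg' : cc @ \oo --> cinf.
Proof. by have [hc _] := cc_cvg. Qed.

Lemma eps_cvg0 : eps @ \oo --> 0.
Proof.
have h1 : (fun i => cc (i - s.+1)%N) @ \oo --> cinf.
  by rewrite (cvg_centern s.+1 cc (nbhs cinf)); exact: cc_cvg'.
have e0 : 0 = (1 - p) * b%:R * cinf - phi by rewrite /phi subrr.
rewrite e0 /eps.
apply: cvgB; last exact: cvg_cst.
apply: cvgM; [exact: cvg_cst | exact: h1].
Qed.

Lemma Ecum_avg : (fun i => Ecum eps i / i.+1%:R) @ \oo --> 0.
Proof.
have h1 : (fun k => `|eps k|) @ \oo --> 0 by apply/norm_cvg0P; exact: eps_cvg0.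
have := cesaro h1.
have -> : arithmetic_mean (fun k => `|eps k|) = (fun i => Ecum eps i / i.+1%:R).
  by apply/funext => i; rewrite /arithmetic_mean /= seriesEnat /= big_mkord /Ecum mulrC.
by [].
Qed.

Definition hh i := MM * i.+1%:R^-1 + Ecum eps i / i.+1%:R.

Lemma hh_cvg : hh @ \oo --> 0.
Proof.
rewrite -(addr0 0) /hh.
apply: cvgD; last exact: Ecum_avg.
rewrite -(mulr0 MM); apply: cvgM; first exact: cvg_cst.
exact: cvg_harmonic.
Qed.

Lemma uu_avg : (fun i => uu i / i.+1%:R) @ \oo --> 0.
Proof.
apply: (@squeeze_cvgr _ _ _ _ (fun i => - hh i) hh); last 2 first.
- by rewrite -oppr0; apply: cvgN; exact: hh_cvg.
- exact: hh_cvg.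
near=> i.
have hi : 0 < i.+1%:R :> R by rewrite ltr0n.
have hbd := uu_bound i.
have : `|uu i / i.+1%:R| <= hh i.
  have -> : hh i = (MM + Ecum eps i) / i.+1%:R by rewrite /hh mulrDl.
  rewrite normrM normfV (ger0_norm (ltW hi)) ler_pM2r ?invr_gt0 //.
by rewrite ler_norml.
Unshelve. all: by end_near.
Qed.

Definition vv i := ww i / i.+1%:R.

Lemma vv_cvg : vv @ \oo --> K.
Proof.
have e : vv = (fun i => uu i / i.+1%:R + K * (1 - i.+1%:R^-1)).
  apply/funext => i; rewrite /vv /uu.
  have hi : i.+1%:R != 0 :> R by rewrite pnatr_eq0.
  rewrite -natr1; field.
  by rewrite natr1.
have h1 : (fun i => 1 - i.+1%:R^-1) @ \oo --> ((1 : R) - 0).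
  apply: cvgB; [exact: cvg_cst | exact: cvg_harmonic].
rewrite subr0 in h1.
have h2 : (fun i => K * (1 - i.+1%:R^-1)) @ \oo --> K * 1.
  by apply: cvgM; [exact: cvg_cst | exact: h1].
rewrite mulr1 in h2.
have h3 : (fun i => uu i / i.+1%:R + K * (1 - i.+1%:R^-1)) @ \oo --> 0 + K.
  by apply: cvgD; [exact: uu_avg | exact: h2].
by rewrite e -[X in _ --> X]add0r.
Qed.

Lemma Wd_pos k : (0 < k)%N -> (0 < Wd s b k)%N.
Proof.
move=> hk; apply: (@leq_trans (Wd s b 1)); last exact: Wd_mono.
rewrite /Wd XsS /Cd Xs0 sub0n Xs0 /= muln0 muln1 !add0n muln_gt0 hb. done.
Qed.

Variable d : nat.

Definition F J := rho ^- d * (vv J.+1 * (J.+2%:R / J.+1%:R) - p * vv J) /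
  (vv (J + d.+1)%N * ((J + d.+2)%N%:R / J.+1%:R)).

Lemma F_eq J : ((Wd s b J.+1)%:R - (Wd s b J)%:R) / (Wd s b (J + d.+1)%N)%:R = F J.
Proof.
have W0 : (Wd s b (J + d.+1)%N)%:R != 0 :> R.
  by rewrite pnatr_eq0 -lt0n Wd_pos // addnS.
rewrite /F /vv /ww /p.
have e1 : J.+1%:R = J%:R + 1 :> R by rewrite natr1.
have e2 : J.+2%:R = J%:R + 2 :> R by rewrite -addn2 natrD.
have e3 : (J + d.+1)%N.+1%:R = J%:R + d%:R + 2 :> R.
  have -> : (J + d.+1)%N.+1 = (J + d + 2)%N by lia.
  by rewrite !natrD.
have e3' : (J + d.+2)%N%:R = J%:R + d%:R + 2 :> R.
  have -> : (J + d.+2)%N = (J + d + 2)%N by lia.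
  by rewrite !natrD.
rewrite e1 e2 e3 e3' exprD !exprS.
have h0 : 0 <= J%:R :> R by [].
have h1 : 0 <= d%:R :> R by [].
have n1 : J%:R + 1 != 0 :> R by rewrite gt_eqF //; lra.
have n2 : J%:R + 2 != 0 :> R by rewrite gt_eqF //; lra.
have n3 : J%:R + d%:R + 2 != 0 :> R by rewrite gt_eqF //; lra.
field.
by rewrite n1 n2 n3 W0 rho_neq0 !rhoX_neq0.
Qed.

Lemma F_cvg : F @ \oo --> rho ^- d * (1 - p).
Proof.
have hK : K != 0 by rewrite gt_eqF // K_gt0.
have r1 : (fun J => J.+2%:R / J.+1%:R) @ \oo --> (1 : R).
  have -> : (fun J => J.+2%:R / J.+1%:R) = (fun J => 1 + J.+1%:R^-1 :> R).
    apply/funext => J; have hJ : J.+1%:R != 0 :> R by rewrite pnatr_eq0.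
    have -> : J.+2%:R = J.+1%:R + 1 :> R by rewrite natr1.
    by field.
  rewrite -[X in _ --> X]addr0; apply: cvgD; [exact: cvg_cst | exact: cvg_harmonic].
have r2 : (fun J => (J + d.+2)%N%:R / J.+1%:R) @ \oo --> (1 : R).
  have -> : (fun J => (J + d.+2)%N%:R / J.+1%:R) =
      (fun J => 1 + d.+1%:R * J.+1%:R^-1 :> R).
    apply/funext => J; have hJ : J.+1%:R != 0 :> R by rewrite pnatr_eq0.
    have -> : (J + d.+2)%N = (J.+1 + d.+1)%N by lia.
    by rewrite natrD; field.
  have h : (fun J => 1 + d.+1%:R * J.+1%:R^-1 :> R) @ \oo --> (1 + d.+1%:R * 0 : R).
    apply: cvgD; first exact: cvg_cst.
    apply: cvgM; [exact: cvg_cst | exact: cvg_harmonic].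
  by rewrite mulr0 addr0 in h.
have v0 := vv_cvg.
have v1 : (fun J => vv J.+1) @ \oo --> K by rewrite (cvg_shiftS vv (nbhs K)).
have v2 : (fun J => vv (J + d.+1)%N) @ \oo --> K by rewrite (cvg_shiftn d.+1 vv (nbhs K)).
have num : (fun J => vv J.+1 * (J.+2%:R / J.+1%:R) - p * vv J) @ \oo --> K * 1 - p * K.
  apply: cvgB; first by apply: cvgM.
  by apply: cvgM; first exact: cvg_cst.
have den : (fun J => vv (J + d.+1)%N * ((J + d.+2)%N%:R / J.+1%:R)) @ \oo --> K * 1.
  by apply: cvgM.
have hK1 : K * 1 != 0 by rewrite mulr1.
have iden := cvgV hK1 den.
have tot : (fun J => rho ^- d * (vv J.+1 * (J.+2%:R / J.+1%:R) - p * vv J) *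
   (vv (J + d.+1)%N * ((J + d.+2)%N%:R / J.+1%:R))^-1) @ \oo -->
   rho ^- d * (K * 1 - p * K) * (K * 1)^-1.
  apply: cvgM; last exact: iden.
  apply: cvgM; [exact: cvg_cst | exact: num].
have ee : rho ^- d * (K * 1 - p * K) * (K * 1)^-1 = rho ^- d * (1 - p).
  by rewrite !mulr1; field; rewrite hK rhoX_neq0.
by rewrite -ee.
Qed.
End Main.

End An2.

Import Comb1 An1 An2.
Unset Implicit Arguments. Set Strict Implicit. Set Printing Implicit Defensive.
Local Open Scope classical_set_scope.
Local Open Scope ring_scope.

Lemma pos_root (R : realType) (s b : nat) : (1 <= b)%N ->
  exists2 x0 : R, 1 <= x0 & x0 ^+ ((s + 1) * b) - x0 ^+ (s * b) - b%:R = 0.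
Proof.
move=> hb.
set f := fun x : R => x ^+ ((s + 1) * b) - x ^+ (s * b) - b%:R.
have f1 : f 1 <= 0 by rewrite /f !expr1n subrr sub0r oppr_le0.
have f2 : 0 <= f 2.
  have hn : (2 ^ (s * b) + b <= 2 ^ ((s + 1) * b))%N.
    rewrite mulnDl mul1n expnD.
    have h1 : (b < 2 ^ b)%N by apply: ltn_expl.
    have h2 : (1 <= 2 ^ (s * b))%N by rewrite expn_gt0.
    have : (2 ^ (s * b) * b.+1 <= 2 ^ (s * b) * 2 ^ b)%N by rewrite leq_mul2l h1 orbT.
    nia.
  rewrite /f -!natrX subr_ge0 -natrB ?ler_nat; last by move: hn; lia.
  by move: hn; lia.
have fc : {within `[1, 2], continuous f}.
  apply: continuous_subspaceT => x.
  rewrite /f; apply: cvgB; last exact: cvg_cst.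
  by apply: cvgB; apply: exprn_continuous.
have h12 : (1 : R) <= 2 by lra.
have hmm : Num.min (f 1) (f 2) <= 0 <= Num.max (f 1) (f 2).
  by rewrite ge_min f1 /= le_max f2 orbT.
have [x0 hx0 fx0] := @IVT R f 1 2 0 h12 fc hmm.
exists x0 => //.
by move: hx0; rewrite in_itv /= => /andP [].
Qed.

Lemma Pn_val (R : realType) s b a dec g k : (1 <= b)%N -> is_generacci s b a ->
  (forall m : nat, (0 < m)%N -> legal_decomp s b a (dec m) m) ->
  Pn R b a dec g k.+1 =
  (if (s < g)%N then Wd s b (k.+1 - g) - Wd s b (k - g) else 0)%N%:R / (Wd s b (k - s))%:R.
Proof.
move=> hb Ha Hd; rewrite /Pn /=.
have e1 : (k * b).+1 = (b * k + 1)%N by rewrite mulnC addn1.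
have e2 : (k.+1 * b).+1 = (b * k.+1 + 1)%N by rewrite mulnC addn1.
by rewrite e1 e2 (Num_val hb Ha Hd) (Den_val hb Ha Hd).
Qed.

Theorem theorem1p15 (R : realType) (s b : nat) (a : nat -> nat)
    (dec : nat -> seq nat) (lam : R) :
  (1 <= s)%N -> (1 <= b)%N ->
  is_generacci s b a ->
  (forall m : nat, (0 < m)%N -> legal_decomp s b a (dec m) m) ->
  lam ^+ ((s + 1) * b) - lam ^+ (s * b) - b%:R = 0 ->
  (forall x : R, x ^+ ((s + 1) * b) - x ^+ (s * b) - b%:R = 0 -> x <= lam) ->
  exists P : nat -> R,
    (forall g : nat, Pn R b a dec g n @[n --> \oo] --> P g) /\
    (forall g : nat, (g < s + 1)%N -> P g = 0) /\
    (forall g : nat, (s + 1 <= g)%N -> P g = b%:R * (lam ^+ b) ^- g).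
Proof.
move=> hs hb Ha Hd hlam hmax.
have [x0 hx0 fx0] := pos_root R s b hb.
have hl1 : 1 <= lam by apply: le_trans hx0 (hmax _ fx0).
set rho := lam ^+ b.
have hr0 : 0 < rho by apply: exprn_gt0; lra.
have heq : rho ^+ s.+1 = rho ^+ s + b%:R.
  move: hlam; rewrite /rho -!exprM [(b * _)%N]mulnC [(b * s)%N]mulnC addn1.
  move=> h; have := h; lra.
have hrho : 1 < rho.
  have hrs : 0 < rho ^+ s by apply: exprn_gt0.
  have hbr : 0 < b%:R :> R by rewrite ltr0n.
  move: heq; rewrite exprSr => heq.
  have : rho ^+ s * 1 < rho ^+ s * rho by rewrite mulr1; lra.
  by rewrite ltr_pM2l.
exists (fun g => if (s < g)%N then b%:R * (lam ^+ b) ^- g else 0).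
split; last first.
  split => g hg; first by have -> : (s < g)%N = false by lia.
  by have -> : (s < g)%N = true by lia.
move=> g; case: ifP => hg; last first.
  rewrite -cvg_shiftS.
  have -> : (fun n => Pn R b a dec g n.+1) = (fun=> 0).
    by apply/funext => n; rewrite (@Pn_val R s b a dec g _ hb Ha Hd) hg mul0r.
  exact: cvg_cst.
set d := (g - s.+1)%N.
have hrn : rho != 0 by rewrite gt_eqF.
have H : (fun n => Pn R b a dec g (n + g.+1)%N) @ \oo --> rho ^- d * (1 - p rho).
  have -> : (fun n => Pn R b a dec g (n + g.+1)%N) = F s b rho d.
    apply/funext => J; rewrite addnS (@Pn_val R s b a dec g _ hb Ha Hd) hg.
    rewrite -(@F_eq R s b rho hb hrho d J).
    have -> : ((J + g).+1 - g = J.+1)%N by lia.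
    have -> : (J + g - g = J)%N by lia.
    have -> : (J + g - s = J + d.+1)%N by rewrite /d; lia.
    by rewrite natrB // Wd_mono.
  exact: (@F_cvg R s b rho hb hrho heq d).
have -> : b%:R * (lam ^+ b) ^- g = rho ^- d * (1 - p rho).
  rewrite (@q_eq R s b rho hrho heq) -/rho.
  have -> : g = (d + s.+1)%N by rewrite /d; lia.
  rewrite exprD invfM; field.
  by rewrite (expf_neq0 _ hrn) (expf_neq0 _ hrn).
have E := cvg_shiftn g.+1 (Pn R b a dec g) (nbhs (rho ^- d * (1 - p rho))).
exact: (eq_rect _ (fun P : Prop => P) H _ E).
Qed.
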